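(* Let $q$ be a prime power, let $d \ge 1$ be a fixed integer, and let $f:\mathbb{F}_q^n \rightarrow \mathbb{F}_q$ be an unknown multilinear polynomial of degree $d$ over $\mathbb{F}_q$. Then any quantum query algorithm which learns $f$ with bounded error (i.e. outputs $f$ with probability at least a fixed constant, e.g. $2/3$, for every such $f$) must make $\Omega(n^{d-1})$ queries to $f$.
   Context: $\mathbb{F}_q$ denotes the finite field with $q$ elements. A function $f:\mathbb{F}_q^n \rightarrow \mathbb{F}_q$ is a multilinear polynomial of degree $d$ if it can be written as $f(x) = \sum_{S \subseteq [n],|S|\le d} \alpha_S \prod_{i \in S} x_i$ for some coefficients $\alpha_S \in \mathbb{F}_q$, where $[n]=\{1,\dots,n\}$ and the empty product equals $1$. In the quantum query model, the algorithm accesses $f$ only via the unitary oracle $O_f \ket{x}\ket{y} = \ket{x}\ket{y + f(x)}$ for $x \in \mathbb{F}_q^n$, $y \in \mathbb{F}_q$ (interleaved with arbitrary oracle-independent unitaries and a final measurement); the number of queries is the number of applications of $O_f$. To learn $f$ means to output (a description of) $f$, i.e. all its coefficients $\alpha_S$. *)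

(* Defs.v *)
From mathcomp Require Import all_boot all_order all_algebra all_field.
From mathcomp Require Import complex.
From mathcomp Require Import Rstruct.
Set Implicit Arguments. Unset Strict Implicit. Unset Printing Implicit Defensive.
Import Order.TTheory GRing.Theory Num.Theory.
Local Open Scope ring_scope.

Definition Rr : rcfType := Rdefinitions.R.
Definition C : numClosedFieldType := complex Rr.

(* coefficient vectors (alpha_S)_{S subseteq [n]} *)
Definition coeffs (F : finFieldType) (n : nat) := {ffun {set 'I_n} -> F}.

Definition deg_le (F : finFieldType) (n d : nat) (a : coeffs F n) : Prop :=
  forall S : {set 'I_n}, (d < #|S|)%N -> a S = 0.

Definition mlpoly_eval (F : finFieldType) (n : nat) (a : coeffs F n)
  (x : {ffun 'I_n -> F}) : F :=
  \sum_(S : {set 'I_n}) a S * \prod_(i in S) x i.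

(* computational basis: query register x in F^n, answer register y in F,
   workspace register w in an arbitrary finite set W *)
Definition basis (F : finFieldType) (n : nat) (W : finType) : finType :=
  ({ffun 'I_n -> F} * F * W)%type.

Definition op (B : finType) := B -> B -> C.
Definition qstate (B : finType) := B -> C.

Definition op_app (B : finType) (U : op B) (v : qstate B) : qstate B :=
  fun b => \sum_(b' : B) U b b' * v b'.

Definition unitary (B : finType) (U : op B) : Prop :=
  forall b b' : B, \sum_(k : B) (U k b)^* * U k b' = (b == b')%:R.

Definition ket (B : finType) (b0 : B) : qstate B := fun b => (b == b0)%:R.

(* O_f |x,y,w> = |x, y + f(x), w>, hence (O_f v)(x,y,w) = v(x, y - f(x), w) *)
Definition oracle (F : finFieldType) (n : nat) (W : finType)
  (f : {ffun 'I_n -> F} -> F) (v : qstate (basis F n W)) : qstate (basis F n W) :=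
  fun b => let: (x, y, w) := b in v (x, y - f x, w).

(* state after U_k O_f U_{k-1} ... O_f U_0 applied to v0 (k oracle calls) *)
Fixpoint run (F : finFieldType) (n : nat) (W : finType)
  (U : nat -> op (basis F n W)) (v0 : qstate (basis F n W))
  (f : {ffun 'I_n -> F} -> F) (k : nat) : qstate (basis F n W) :=
  match k with
  | 0 => op_app (U 0%N) v0
  | k'.+1 => op_app (U k) (oracle f (run U v0 f k'))
  end.

Definition success_prob (B : finType) (A : eqType) (out : B -> A) (a : A)
  (psi : qstate B) : C :=
  \sum_(b : B | out b == a) `|psi b| ^+ 2.

(* Main.v *)
Require Import Defs.
From mathcomp Require Import all_boot all_order all_algebra all_field.
From mathcomp Require Import complex.
From mathcomp Require Import Rstruct.
From mathcomp Require Import ring lra zify.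
From Stdlib Require Import Lia.
Import Order.TTheory GRing.Theory Num.Theory.
Set Implicit Arguments. Unset Strict Implicit. Unset Printing Implicit Defensive.
Local Open Scope ring_scope.

Lemma cs_real (m : nat) (a b : 'I_m -> C) :
  (forall i, 0 <= a i) -> (forall i, 0 <= b i) ->
  (\sum_i a i * b i) ^+ 2 <= (\sum_i a i ^+ 2) * (\sum_i b i ^+ 2).
Proof.
move=> ha hb.
have E : \sum_i \sum_j (a i * b j - a j * b i) ^+ 2 =
   2%:R * ((\sum_i a i ^+ 2) * (\sum_i b i ^+ 2) - (\sum_i a i * b i) ^+ 2).
  have E1 : \sum_i \sum_j (a i * b j - a j * b i) ^+ 2 =
     \sum_i \sum_j (a i ^+ 2 * b j ^+ 2) + \sum_i \sum_j (a j ^+ 2 * b i ^+ 2)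
     - 2%:R * \sum_i \sum_j (a i * b i * (a j * b j)).
    rewrite mulr_sumr -!big_split -sumrB /=; apply: eq_bigr => i _.
    rewrite mulr_sumr -!big_split -sumrB /=; apply: eq_bigr => j _.
    ring.
  rewrite E1 (exchange_big _ _ _ _ _ (fun i j => a j ^+ 2 * b i ^+ 2)) /=.
  have P1 : (\sum_i a i ^+ 2) * (\sum_i b i ^+ 2) = \sum_i \sum_j (a i ^+ 2 * b j ^+ 2).
    by rewrite mulr_suml; apply: eq_bigr => i _; rewrite mulr_sumr.
  have P2 : (\sum_i a i * b i) ^+ 2 = \sum_i \sum_j (a i * b i * (a j * b j)).
    by rewrite expr2 mulr_suml; apply: eq_bigr => i _; rewrite mulr_sumr.
  rewrite P1 P2; ring.
have : 0 <= \sum_i \sum_j (a i * b j - a j * b i) ^+ 2.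
  apply: sumr_ge0 => i _; apply: sumr_ge0 => j _.
  have hr : (a i * b j - a j * b i) \is Num.real.
    by apply: realB; apply: ger0_real; apply: mulr_ge0.
  by rewrite -(real_normK hr) exprn_ge0.
rewrite E pmulr_rge0 ?ltr0n // subr_ge0 => //.
Qed.

Lemma cs_cplx (m : nat) (x y : 'I_m -> C) :
  `|\sum_i x i * y i| ^+ 2 <= (\sum_i `|x i| ^+ 2) * (\sum_i `|y i| ^+ 2).
Proof.
have H := @cs_real m (fun i => `|x i|) (fun i => `|y i|) (fun i => normr_ge0 (x i)) (fun i => normr_ge0 (y i)).
apply: (le_trans _ H).
apply: lerXn2r; rewrite ?qualifE ?normr_ge0 //=.
  by apply: sumr_ge0 => i _; apply: mulr_ge0; apply: normr_ge0.
apply: le_trans (ler_norm_sum _ _ _) _.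
by apply: ler_sum => i _; rewrite normrM.
Qed.

Definition dot (B : finType) (u v : qstate B) : C := \sum_b (u b)^* * v b.

Lemma dotC (B : finType) (u v : qstate B) : dot v u = (dot u v)^*.
Proof.
rewrite /dot rmorph_sum; apply: eq_bigr => b _.
by rewrite rmorphM /= conjCK mulrC.
Qed.

Lemma dot_nrm (B : finType) (v : qstate B) : dot v v = \sum_b `|v b| ^+ 2.
Proof. by apply: eq_bigr => b _; rewrite normCKC. Qed.

Lemma dot_ge0 (B : finType) (v : qstate B) : 0 <= dot v v.
Proof. by rewrite dot_nrm; apply: sumr_ge0 => b _; apply: exprn_ge0. Qed.

Lemma dot_eq0 (B : finType) (v : qstate B) : dot v v = 0 -> forall b, v b = 0.
Proof.
rewrite dot_nrm => /eqP; rewrite psumr_eq0 => [/allP H b|b _]; last exact: exprn_ge0.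
have := H b (mem_index_enum b); rewrite /= sqrf_eq0 normr_eq0.
by move/eqP.
Qed.

Lemma dot_ext (B : finType) (u u' v v' : qstate B) :
  (forall b, u b = u' b) -> (forall b, v b = v' b) -> dot u v = dot u' v'.
Proof. by move=> hu hv; apply: eq_bigr => b _; rewrite hu hv. Qed.

Lemma dot_linr (B : finType) (I : finType) (u : qstate B) (c : I -> C)
  (w : I -> qstate B) :
  dot u (fun b => \sum_i c i * w i b) = \sum_i c i * dot u (w i).
Proof.
rewrite /dot; under eq_bigr do rewrite mulr_sumr.
rewrite exchange_big; apply: eq_bigr => i _; rewrite mulr_sumr.
by apply: eq_bigr => b _; rewrite mulrCA.
Qed.

Lemma dotDr (B : finType) (u x y : qstate B) :
  dot u (fun b => x b + y b) = dot u x + dot u y.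
Proof. by rewrite /dot -big_split; apply: eq_bigr => b _; rewrite mulrDr. Qed.

Lemma dotBr (B : finType) (u x y : qstate B) :
  dot u (fun b => x b - y b) = dot u x - dot u y.
Proof. by rewrite /dot -sumrB; apply: eq_bigr => b _; rewrite mulrBr. Qed.

Lemma dotZr (B : finType) (u x : qstate B) a :
  dot u (fun b => a * x b) = a * dot u x.
Proof. by rewrite /dot mulr_sumr; apply: eq_bigr => b _; rewrite mulrCA. Qed.

Lemma dotZl (B : finType) (u x : qstate B) a :
  dot (fun b => a * x b) u = a^* * dot x u.
Proof.
by rewrite /dot mulr_sumr; apply: eq_bigr => b _; rewrite rmorphM mulrA.
Qed.

Definition ON (B : finType) (m : nat) (u : nat -> qstate B) :=
  forall i j, (i < m)%N -> (j < m)%N -> dot (u i) (u j) = (i == j)%:R.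

Definition proj (B : finType) (m : nat) (u : nat -> qstate B) (v : qstate B) :
  qstate B := fun b => \sum_(i < m) dot (u i) v * u i b.

Lemma dot_proj (B : finType) m (u : nat -> qstate B) v j :
  ON m u -> (j < m)%N -> dot (u j) (proj m u v) = dot (u j) v.
Proof.
move=> hON hj; rewrite /proj dot_linr (bigD1 (Ordinal hj)) //= big1 => [|i hi].
  by rewrite hON // eqxx mulr1 addr0.
rewrite hON // ?ltn_ord //.
case: eqP => [hji|]; last by rewrite mulr0.
by move: hi; rewrite -val_eqE /= hji eqxx.
Qed.

Lemma dot_lin_ortho (B : finType) m (u : nat -> qstate B) (e v : qstate B) :
  (forall j, (j < m)%N -> dot e (u j) = 0) ->
  (forall b, v b = proj m u v b) -> dot e v = 0.
Proof.
move=> he hv; rewrite (dot_ext (fun=> erefl) hv) /proj dot_linr big1 // => i _.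
by rewrite he ?mulr0.
Qed.

Lemma gs (B : finType) (c : nat -> qstate B) n :
  exists m u, (m <= n)%N /\ ON m u /\
    forall k, (k < n)%N -> forall b, c k b = proj m u (c k) b.
Proof.
elim: n => [|n [m [u [hmn [hON hsp]]]]].
  by exists 0%N, (fun _ _ => 0); split => //; split => // i j.
pose w := fun b => c n b - proj m u (c n) b.
have hw : forall j, (j < m)%N -> dot (u j) w = 0.
  by move=> j hj; rewrite dotBr dot_proj // subrr.
have hw' : forall j, (j < m)%N -> dot w (u j) = 0.
  by move=> j hj; rewrite dotC hw // rmorph0.
have [N0|N0] := eqVneq (dot w w) 0.
  exists m, u; split; first by apply: leqW.
  split => // k; rewrite ltnS leq_eqVlt => /orP [/eqP -> | hk]; last exact: hsp.
  move=> b; have := dot_eq0 N0 b; rewrite /w => /eqP; rewrite subr_eq0.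
  by move/eqP.
pose s := sqrtC (dot w w).
have s0 : s != 0 by rewrite sqrtC_eq0.
have sge : 0 <= s by rewrite sqrtC_ge0 dot_ge0.
have sc : s^-1^* = s^-1 by rewrite geC0_conj // invr_ge0.
pose e := fun b => s^-1 * w b.
have he : forall j, (j < m)%N -> dot e (u j) = 0.
  by move=> j hj; rewrite dotZl hw' // mulr0.
have hee : dot e e = 1.
  rewrite dotZl dotZr sc -(sqrtCK (dot w w)) -/s.
  by field.
exists m.+1, (fun i => if i == m then e else u i); split => //; split.
  move=> i j hi hj.
  case: (eqVneq i m) => [Hi|him]; case: (eqVneq j m) => [Hj|hjm]; rewrite ?Hi ?Hj /=.
  - by rewrite hee eqxx.
  - by rewrite he 1?eq_sym ?(negPf hjm) // ltn_neqAle hjm -ltnS.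
  - by rewrite dotZr hw ?mulr0 ?(negPf him) // ltn_neqAle him -ltnS.
  - by apply: hON; rewrite ltn_neqAle ?him ?hjm -ltnS.
have projS : forall v b, proj m.+1 (fun i => if i == m then e else u i) v b =
     proj m u v b + dot e v * e b.
  move=> v b; rewrite /proj big_ord_recr /= eqxx; congr (_ + _).
  by apply: eq_bigr => i _; rewrite /= ifN // neq_ltn ltn_ord.
move=> k; rewrite ltnS leq_eqVlt => /orP [/eqP -> | hk] b; rewrite projS.
  have -> : dot e (c n) = s.
    have hcn : forall b, c n b = proj m u (c n) b + w b.
      by move=> b'; rewrite /w addrC subrK.
    rewrite (dot_ext (fun=> erefl) hcn) dotDr.
    rewrite (dot_lin_ortho (v := proj m u (c n)) he); last first.
      move=> b'; rewrite {1}/proj; apply: eq_bigr => i _.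
      by rewrite dot_proj.
    by rewrite add0r dotZl sc -(sqrtCK (dot w w)) -/s expr2 mulrA mulVf // mul1r.
  by rewrite /e mulrA mulfV // mul1r /w addrC subrK.
by rewrite (dot_lin_ortho he (hsp k hk)) mul0r addr0 -hsp.
Qed.

Lemma proj_bound (B : finType) m (u : nat -> qstate B) (v : qstate B) :
  ON m u -> (forall b, v b = proj m u v b) ->
  forall b, `|v b| ^+ 2 <= dot v v * \sum_(i < m) `|u i b| ^+ 2.
Proof.
move=> hON hv b.
have -> : dot v v = \sum_(i < m) `|dot (u i) v| ^+ 2.
  rewrite (dot_ext (fun=> erefl) hv) /proj dot_linr.
  by apply: eq_bigr => i _; rewrite -[dot v _]/(dot v (u i)) (dotC (u i) v) normCK.
rewrite (hv b) /proj; exact: cs_cplx.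
Qed.

Lemma key_bound (B J : finType) (c : J -> qstate B) (Ty : Type)
  (psi : Ty -> qstate B) :
  (forall t, dot (psi t) (psi t) = 1) ->
  (forall t, exists lam : J -> C, forall b, psi t b = \sum_j lam j * c j b) ->
  exists s : B -> C, (forall b, 0 <= s b) /\ \sum_b s b <= #|J|%:R /\
    forall t b, `|psi t b| ^+ 2 <= s b.
Proof.
move=> hn hsp.
pose c' := fun k => nth (fun=> 0) (map c (enum J)) k.
have [m [u [hm [hON hpr]]]] := gs c' #|J|.
have hc : forall j b, c j b = proj m u (c j) b.
  move=> j; have hj : (index j (enum J) < size (enum J))%N.
    by rewrite index_mem mem_enum.
  have := hpr (index j (enum J)); rewrite /c' (nth_map j) // nth_index ?mem_enum //.
  by apply; rewrite cardE.
exists (fun b => \sum_(i < m) `|u i b| ^+ 2); split.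
  by move=> b; apply: sumr_ge0 => i _; apply: exprn_ge0.
split.
  rewrite exchange_big /=.
  have -> : \sum_(i < m) \sum_b `|u i b| ^+ 2 = \sum_(i < m) 1.
    by apply: eq_bigr => i _; rewrite -dot_nrm hON // eqxx.
  by rewrite sumr_const card_ord ler_nat.
move=> t b.
have hp : forall b, psi t b = proj m u (psi t) b.
  have [lam hl] := hsp t => b'.
  rewrite hl /proj.
  have -> : \sum_(i < m) dot (u i) (psi t) * u i b' =
            \sum_(i < m) \sum_j lam j * (dot (u i) (c j) * u i b').
    apply: eq_bigr => i _; rewrite (dot_ext (fun=> erefl) hl) dot_linr mulr_suml.
    by apply: eq_bigr => j _; rewrite mulrA.
  rewrite exchange_big; apply: eq_bigr => j _.
  by rewrite -mulr_sumr hc.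
have := proj_bound hON hp b; by rewrite hn mul1r.
Qed.

Lemma unitary_dot (B : finType) (U : op B) (v : qstate B) :
  unitary U -> dot (op_app U v) (op_app U v) = dot v v.
Proof.
move=> hU; rewrite /dot /op_app.
have -> : \sum_b (\sum_b' U b b' * v b')^* * (\sum_b' U b b' * v b') =
   \sum_b \sum_b' \sum_b'' ((U b b')^* * U b b'') * ((v b')^* * v b'').
  apply: eq_bigr => b _; rewrite rmorph_sum mulr_suml; apply: eq_bigr => b' _.
  rewrite mulr_sumr; apply: eq_bigr => b'' _; rewrite rmorphM; ring.
rewrite exchange_big; apply: eq_bigr => b' _.
rewrite exchange_big /=.
rewrite (eq_bigr (fun b'' => (b' == b'')%:R * ((v b')^* * v b''))); last first.
  by move=> b'' _; rewrite -mulr_suml hU.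
rewrite (bigD1 b') //= big1 => [|b'' hb]; first by rewrite eqxx mul1r addr0.
by rewrite eq_sym (negPf hb) mul0r.
Qed.

Lemma oracle_dot (F : finFieldType) (n : nat) (W : finType)
  (f : {ffun 'I_n -> F} -> F) (v : qstate (basis F n W)) :
  dot (oracle f v) (oracle f v) = dot v v.
Proof.
rewrite !dot_nrm.
have L : forall G : basis F n W -> C, \sum_b G b =
   \sum_x \sum_y \sum_w G (x, y, w).
  move=> G; rewrite pair_bigA pair_bigA /=.
  by apply: eq_bigr => [[[x y] w]] _.
rewrite !L.
apply: eq_bigr => x _.
rewrite (reindex_inj (addIr (f x))) /=.
by apply: eq_bigr => y _; rewrite addrK.
Qed.

Lemma ket_dot (B : finType) (b0 : B) : dot (ket b0) (ket b0) = 1.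
Proof.
rewrite /dot /ket (bigD1 b0) //= big1 => [|b hb]; first by rewrite eqxx rmorph1 mulr1 addr0.
by rewrite (negPf hb) mulr0.
Qed.

Lemma sum_ind (I : finType) (x : I) (h : I -> C) :
  \sum_i (x == i)%:R * h i = h x.
Proof.
rewrite (bigD1 x) //= big1 => [|i hi]; first by rewrite eqxx mul1r addr0.
by rewrite eq_sym (negPf hi) mul0r.
Qed.

Definition Pt (F : finFieldType) (n : nat) := ({ffun 'I_n -> F} * F)%type.
Definition Jt (F : finFieldType) (n T : nat) := {ffun 'I_T -> Pt F n}.

Definition Ek (F : finFieldType) (n T : nat) (k : nat) (j : Jt F n T)
  (a : coeffs F n) : C :=
  \prod_(i < T | (i < k)%N) ((mlpoly_eval a (j i).1 == (j i).2)%:R).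

Definition upd (F : finFieldType) (n T : nat) (j : Jt F n T) (k : nat)
  (p : Pt F n) : Jt F n T := [ffun i : 'I_T => if val i == k then p else j i].

Definition jd (F : finFieldType) (n T : nat) : Jt F n T :=
  [ffun _ => ([ffun _ => 0], 0)].

Fixpoint cc (F : finFieldType) (n : nat) (W : finType) (T : nat)
  (U : nat -> op (basis F n W)) (b0 : basis F n W) (k : nat) :
  Jt F n T -> qstate (basis F n W) :=
  match k with
  | 0 => fun j b => (j == jd F n T)%:R * op_app (U 0%N) (ket b0) b
  | k'.+1 => fun j' b => \sum_(j : Jt F n T) \sum_(p : Pt F n)
      ((upd j k' p == j')%:R *
       \sum_(y : F) \sum_(w : W) U k b (p.1, y, w) * cc U b0 k' j (p.1, y - p.2, w))
  end.

Lemma Ek_upd (F : finFieldType) (n T : nat) (k : nat) (j : Jt F n T) p a :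
  (k < T)%N -> Ek k.+1 (upd j k p) a = Ek k j a * (mlpoly_eval a p.1 == p.2)%:R.
Proof.
move=> hk; rewrite /Ek (bigD1 (Ordinal hk)) //= mulrC; congr (_ * _).
  apply: eq_big => i.
    by rewrite -val_eqE /= ltnS ltn_neqAle andbC.
  by move=> /andP [_ hi]; rewrite /upd ffunE; move: hi; rewrite -val_eqE /= => /negPf ->.
by rewrite /upd ffunE eqxx.
Qed.

Lemma basis_sum (F : finFieldType) (n : nat) (W : finType)
  (G : basis F n W -> C) : \sum_b G b = \sum_x \sum_y \sum_w G (x, y, w).
Proof.
rewrite pair_bigA pair_bigA /=.
by apply: eq_bigr => [[[x y] w]] _.
Qed.

Lemma run_exp (F : finFieldType) (n : nat) (W : finType) (T : nat)
  (U : nat -> op (basis F n W)) (b0 : basis F n W) (a : coeffs F n) :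
  forall k, (k <= T)%N -> forall b,
  run U (ket b0) (mlpoly_eval a) k b = \sum_(j : Jt F n T) Ek k j a * cc U b0 k j b.
Proof.
elim=> [|k IH] hk b.
  rewrite /= (bigD1 (jd F n T)) //= big1 => [|j hj].
    by rewrite /Ek big_pred0 // eqxx !mul1r addr0.
  by rewrite (negPf hj) mul0r mulr0.
have hkT : (k < T)%N by [].
rewrite /= /op_app basis_sum.
transitivity (\sum_(x : {ffun 'I_n -> F}) \sum_(y : F) \sum_(w : W) \sum_(j : Jt F n T)
   Ek k j a * (U k.+1 b (x, y, w) * cc U b0 k j (x, y - mlpoly_eval a x, w))).
  apply: eq_bigr => x _; apply: eq_bigr => y _; apply: eq_bigr => w _.
  rewrite [oracle _ _ _]/oracle (IH (ltnW hk)) mulr_sumr; apply: eq_bigr => j _; exact: mulrCA.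
symmetry.
transitivity (\sum_(j : Jt F n T) \sum_(p : Pt F n) Ek k.+1 (upd j k p) a *
   \sum_(y : F) \sum_(w : W) U k.+1 b (p.1, y, w) * cc U b0 k j (p.1, y - p.2, w)).
  under eq_bigr do rewrite mulr_sumr.
  rewrite exchange_big; apply: eq_bigr => j _.
  under eq_bigr do rewrite mulr_sumr.
  rewrite exchange_big; apply: eq_bigr => p _.
  under eq_bigr do rewrite mulrCA.
  by rewrite sum_ind.
pose G (j : Jt F n T) (p : Pt F n) := \sum_(y : F) \sum_(w : W)
   U k.+1 b (p.1, y, w) * cc U b0 k j (p.1, y - p.2, w).
transitivity (\sum_(j : Jt F n T) \sum_(x : {ffun 'I_n -> F})
   Ek k j a * G j (x, mlpoly_eval a x)).
  apply: eq_bigr => j _.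
  rewrite (eq_bigr (fun p : Pt F n => Ek k.+1 (upd j k (p.1, p.2)) a * G j (p.1, p.2))); last by case.
  rewrite -(pair_bigA _ (fun x z => Ek k.+1 (upd j k (x, z)) a * G j (x, z))) /=.
  apply: eq_bigr => x _.
  under eq_bigr => z _ do rewrite Ek_upd // mulrAC mulrC.
  exact: (sum_ind (mlpoly_eval a x) (fun z => Ek k j a * G j (x, z))).
rewrite exchange_big; apply: eq_bigr => x _.
rewrite /G.
under eq_bigr do rewrite mulr_sumr.
rewrite exchange_big; apply: eq_bigr => y _.
under eq_bigr do rewrite mulr_sumr.
rewrite exchange_big; apply: eq_bigr => w _.
apply: eq_bigr => j _; by rewrite mulrA.
Qed.

Lemma run_dot (F : finFieldType) (n : nat) (W : finType) (T : nat)
  (U : nat -> op (basis F n W)) (b0 : basis F n W) f :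
  (forall k, (k <= T)%N -> unitary (U k)) ->
  forall k, (k <= T)%N -> dot (run U (ket b0) f k) (run U (ket b0) f k) = 1.
Proof.
move=> hU; elim=> [|k IH] hk /=.
  by rewrite (unitary_dot _ (hU 0%N hk)) ket_dot.
by rewrite (unitary_dot _ (hU _ hk)) oracle_dot IH // ltnW.
Qed.

Lemma ffact_bound d n : (2 * d <= n)%N -> (n ^ d <= 2 ^ d * n ^_ d)%N.
Proof.
elim: d => [|d IH] h; first by rewrite ffactn0.
have h1 : (n <= 2 * (n - d))%N by lia.
have := leq_mul (IH (leq_trans (leq_mul (leqnn 2) (leqnSn d)) h)) h1.
rewrite expnSr ffactnSr expnSr.
by rewrite mulnCA mulnA mulnA [(_ * 2)%N]mulnC -!mulnA mulnCA.
Qed.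

Lemma count_bound (q m n T : nat) : (2 <= q)%N ->
  (2 * q ^ m <= 3 * (q ^ n * q) ^ T)%N -> (m <= n.+1 * T)%N.
Proof.
move=> hq h; rewrite leqNgt; apply/negP => hlt.
have hp : (0 < q ^ (n.+1 * T))%N by rewrite expn_gt0; lia.
move: h; rewrite -expnSr -expnM.
have : (q ^ (n.+1 * T).+1 <= q ^ m)%N by rewrite leq_exp2l //; lia.
rewrite expnSr => h2 h3.
have : (2 * (q ^ (n.+1 * T) * q) <= 3 * q ^ (n.+1 * T))%N.
  by apply: leq_trans h3; rewrite leq_mul2l.
nia.
Qed.

Unset Implicit Arguments.

Theorem proposition1 (F : finFieldType) (d : nat) (hd : (1 <= d)%N) :
  exists c : Rr, 0 < c /\
  exists n0 : nat, forall n : nat, (n0 <= n)%N ->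
  forall (W : finType) (T : nat) (U : nat -> op (basis F n W))
         (b0 : basis F n W) (out : basis F n W -> coeffs F n),
    (forall k : nat, (k <= T)%N -> unitary (U k)) ->
    (forall a : coeffs F n, deg_le d a ->
       (2 / 3 : C) <= success_prob out a (run U (ket b0) (mlpoly_eval a) T)) ->
    c * (n ^ (d - 1))%:R <= T%:R.
Proof.
pose K := (2 ^ d.+1 * d`!)%N.
have K0 : (0 < K)%N by rewrite muln_gt0 expn_gt0 fact_gt0.
exists (K%:R)^-1; split; first by rewrite invr_gt0 ltr0n.
exists (2 * d)%N => n hn W T U b0 out hU hsucc.
pose D := [set S : {set 'I_n} | (#|S| <= d)%N].
pose P := pffun_on (0 : F) D [set: F].
pose psi := fun a : coeffs F n => run U (ket b0) (mlpoly_eval a) T.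
have [s [s0 [sJ sb]]] := @key_bound _ (Jt F n T) (cc U b0 T) _ psi
   (fun a => run_dot b0 (mlpoly_eval a) hU (leqnn T))
   (fun a => ex_intro _ (fun j => Ek T j a) (run_exp U b0 a (leqnn T))).
have hdeg : forall a, a \in P -> deg_le d a.
  move=> a /pffun_onP [hsup _] S hS; apply/eqP; apply/negPn/negP => hne.
  have : S \in D by apply: (subsetP hsup); rewrite inE.
  by rewrite inE leqNgt hS.
have hC : (#|P|%:R * (2 / 3) <= (#|Jt F n T|%:R : C)).
  apply: le_trans sJ.
  have -> : (#|P|%:R * (2 / 3) : C) = \sum_(a in P) (2 / 3 : C).
    by rewrite sumr_const mulr_natl.
  apply: (le_trans (ler_sum _ (fun a ha => hsucc a (hdeg a ha)))).
  rewrite /success_prob.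
  apply: (@le_trans _ _ (\sum_(a in P) \sum_(b | out b == a) s b)).
    apply: ler_sum => a _; apply: ler_sum => b _; exact: sb.
  apply: (@le_trans _ _ (\sum_a \sum_(b | out b == a) s b)).
    rewrite [X in _ <= X](bigID (fun a => a \in P)) /= lerDl.
    apply: sumr_ge0 => a _; apply: sumr_ge0 => b _; exact: s0.
  have -> : \sum_a \sum_(b | out b == a) s b = \sum_a \sum_b (out b == a)%:R * s b.
    apply: eq_bigr => a _; rewrite big_mkcond /=; apply: eq_bigr => b _.
    by case: (out b == a); rewrite ?mul1r ?mul0r.
  by rewrite exchange_big /=; apply: ler_sum => b _; rewrite sum_ind.
have hN : (2 * #|P| <= 3 * #|Jt F n T|)%N.
  have h3 : (3%:R : C) * (#|P|%:R * (2 / 3)) <= 3%:R * #|Jt F n T|%:R.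
    by rewrite ler_pM2l ?ltr0n.
  rewrite -(ler_nat C) !natrM.
  have E : (2%:R : C) * #|P|%:R = 3%:R * (#|P|%:R * (2 / 3)).
    by field.
  by rewrite E.
have hq : (2 <= #|F|)%N by exact: card_finNzRing_gt1.
have hD : (#|D| <= n.+1 * T)%N.
  apply: (count_bound (q := #|F|)) => //.
  move: hN; rewrite /P card_pffun_on cardsT card_ffun card_ord card_prod card_ffun card_ord.
  by [].
have hCD : ('C(n, d) <= #|D|)%N.
  rewrite -{1}(card_ord n) -card_draws; apply: subset_leq_card.
  by apply/subsetP => S; rewrite !inE => /eqP ->.
have hf := ffact_bound (n := n) hn.
rewrite -bin_ffact in hf.
have hnd : (n ^ d = n ^ (d - 1) * n)%N by rewrite -expnSr subn1 prednK.
have hnat : (n ^ (d - 1) <= K * T)%N.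
  have hn0 : (0 < n)%N by lia.
  rewrite -(leq_pmul2r hn0) -hnd; apply: (leq_trans hf).
  rewrite /K expnS.
  have : ('C(n, d) * d`! <= n.+1 * T * d`!)%N by rewrite leq_mul2r (leq_trans hCD hD) orbT.
  move: ('C(n, d) * d`!)%N => X hX.
  have hn1 : (n.+1 <= 2 * n)%N by lia.
  have := leq_mul (leqnn (2 ^ d)) (leq_trans hX (leq_mul (leq_mul hn1 (leqnn T)) (leqnn d`!))).
  move=> h; apply: (leq_trans h); rewrite !mulnA; apply: eq_leq; ring.
rewrite ler_pdivrMl ?ltr0n // -natrM ler_nat.
exact: hnat.
Qed.
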